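(* Let $f$ be a Thurston map with Hurwitz biset $B$, and suppose the natural map $B^{\otimes2}\to B^{\circ2}$, $f_1\otimes f_2\mapsto f_1\circ f_2$, is injective (hence an isomorphism). Then $\mathcal G_{f^{\circ2}}=\{a\in\mathcal G_f: f@a\in\mathcal G_f\}$.
   Context: $P\subset S^2$ finite, $\mathcal G=\mathrm{PMod}(S^2,P)$. $B$ is the set of isotopy classes rel $P$ of $g_0\circ f\circ g_1$ ($g_i$ orientation-preserving homeomorphisms fixing $P$ pointwise), a $\mathcal G$-biset with left action by post-composition and right action by pre-composition; the right action is free. $B^{\circ2}=\{f_1\circ f_2:f_i\in B\}$. $B^{\otimes2}=(B\times B)/\sim$ where $(f_1\circ g,f_2)\sim(f_1,g\circ f_2)$ for $g\in\mathcal G$, with class written $f_1\otimes f_2$. For a map $F$ in such a biset, $\mathcal G_F=\{a\in\mathcal G:\exists b\in\mathcal G,\ a\circ F=F\circ b\}$ (isotopy rel $P$); for $a\in\mathcal G_f$, $f@a$ denotes the unique $b\in\mathcal G$ with $a\circ f=f\circ b$. *)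

(* Defs.v *)
(* Abstract algebraic model of the setting of Lemma 3.1:
   isotopy classes rel P of maps of (S^2,P) under composition, the pure
   mapping class group G = PMod(S^2,P) inside them, and the Hurwitz biset of f. *)
From Stdlib Require Import Relations Relation_Operators.

Record MapSetting := {
  carrier :> Type;
  comp : carrier -> carrier -> carrier;     (* comp x y = x o y *)
  idm : carrier;
  comp_assoc : forall x y z, comp x (comp y z) = comp (comp x y) z;
  comp_id_l : forall x, comp idm x = x;
  comp_id_r : forall x, comp x idm = x;
  inG : carrier -> Prop;
  inG_id : inG idm;
  inG_comp : forall a b, inG a -> inG b -> inG (comp a b);
  inG_inv : forall a, inG a -> exists a', inG a' /\ comp a a' = idm /\ comp a' a = idm
}.

Arguments comp {_} _ _.
Arguments inG {_} _.

Section Defs.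
Variable S : MapSetting.

Definition biset (f : S) (h : S) : Prop :=
  exists g0 g1, inG g0 /\ inG g1 /\ h = comp g0 (comp f g1).

Definition right_free (f : S) : Prop :=
  forall h g g', biset f h -> inG g -> inG g' -> comp h g = comp h g' -> g = g'.

Definition tensor_step (f : S) (p q : S * S) : Prop :=
  exists f1 f2 g, biset f f1 /\ biset f f2 /\ inG g /\
    p = (comp f1 g, f2) /\ q = (f1, comp g f2).

Definition tensor_eq (f : S) : relation (S * S) :=
  clos_refl_sym_trans (S * S) (tensor_step f).

Definition tensor_comp_injective (f : S) : Prop :=
  forall x1 x2 y1 y2, biset f x1 -> biset f x2 -> biset f y1 -> biset f y2 ->
    comp x1 x2 = comp y1 y2 -> tensor_eq f (x1, x2) (y1, y2).

Definition stab (F : S) (a : S) : Prop :=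
  inG a /\ exists b, inG b /\ comp a F = comp F b.

End Defs.

(* Main.v *)
Require Import Defs.
From Stdlib Require Import Relations Relation_Operators.

Definition Inv (S : MapSetting) (f c : S) (p : S * S) : Prop :=
  exists g, inG g /\ fst p = comp f g /\ comp g (snd p) = comp f c.

Lemma inv_step (S : MapSetting) (f c : S) p q :
  tensor_step S f p q -> (Inv S f c p <-> Inv S f c q).
Proof.
  intros (f1 & f2 & g & _ & _ & Hg & -> & ->). unfold Inv; simpl.
  destruct (inG_inv S g Hg) as (g' & Hg' & H1 & H2).
  split.
  - intros (h & Hh & E1 & E2). exists (comp h g'). split; [apply inG_comp; auto|].
    split.
    + rewrite comp_assoc, <- E1, <- comp_assoc, H1, comp_id_r. reflexivity.
    + rewrite <- comp_assoc, (comp_assoc _ g' g f2), H2, comp_id_l. exact E2.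
  - intros (h & Hh & E1 & E2). exists (comp h g). split; [apply inG_comp; auto|].
    split.
    + rewrite E1, comp_assoc. reflexivity.
    + rewrite <- comp_assoc. exact E2.
Qed.

Lemma inv_eq (S : MapSetting) (f c : S) p q :
  tensor_eq S f p q -> (Inv S f c p <-> Inv S f c q).
Proof.
  induction 1.
  - apply inv_step; auto.
  - tauto.
  - tauto.
  - tauto.
Qed.

Theorem lemma3p1 (S : MapSetting) (f : S)
  (Hfree : right_free S f) (Hinj : tensor_comp_injective S f) :
  forall a : S,
    stab S (comp f f) a <->
    (stab S f a /\ exists b, inG b /\ comp a f = comp f b /\ stab S f b).
Proof.
  intros a. split.
  - intros (Ha & c & Hc & E).
    assert (B : forall h, inG h -> biset S f (comp h f)).
    { intros h Hh. exists h, (idm S). repeat split; auto using inG_id.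
      rewrite comp_id_r; reflexivity. }
    assert (Bf : biset S f f).
    { exists (idm S), (idm S). repeat split; auto using inG_id.
      rewrite comp_id_r, comp_id_l; reflexivity. }
    assert (Bfc : biset S f (comp f c)).
    { exists (idm S), c. repeat split; auto using inG_id.
      rewrite comp_id_l; reflexivity. }
    assert (T : tensor_eq S f (comp a f, f) (f, comp f c)).
    { apply Hinj; auto. rewrite <- comp_assoc, E, comp_assoc. reflexivity. }
    assert (I : Inv S f c (f, comp f c)).
    { exists (idm S). simpl. repeat split; auto using inG_id.
      rewrite comp_id_r; reflexivity. rewrite comp_id_l; reflexivity. }
    apply (proj2 (inv_eq S f c _ _ T)) in I.
    destruct I as (g & Hg & E1 & E2). simpl in *.
    split.
    + split; auto. exists g; auto.
    + exists g. split; auto. split; auto. split; auto. exists c; auto.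
  - intros ((Ha & _) & b & Hb & E1 & _ & c & Hc & E2).
    split; auto. exists c. split; auto.
    rewrite comp_assoc, E1, <- comp_assoc, E2, comp_assoc. reflexivity.
Qed.
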